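(* Let $\Psi$ be the standard normal CDF, $c>0$ a fixed constant, $\tau>0$ fixed (the paper uses $\tau=100$), and $g(u)=-2\ln\Psi(c-u)$. Consider a ray $\mathbf{x}(t)=\mathbf{o}+t\boldsymbol{\omega}$ intersecting Gaussian surfels $\mathcal{G}_1,\dots,\mathcal{G}_N$ with weights $w_i>0$ and colors $\mathbf{c}_i$, where $\mathcal{G}_i(\mathbf{x})=\exp\bigl(-\tfrac12(\mathbf{x}-\mathbf{m}_i)^T\Sigma_i^{-1}(\mathbf{x}-\mathbf{m}_i)\bigr)$ is a planar (2D) Gaussian with center $\mathbf{m}_i$ and covariance $\Sigma_i$, the ray meets the plane of surfel $i$ at depth $t_i$, and $f_i=w_i\mathcal{G}_i(\mathbf{x}(t_i))$. Define the blended colors $$\widehat{\mathbf{c}}_i=\frac{\sum_{j=1}^N(1-\exp(-w_j))\exp(-\tau|t_j-t_i|)\,\mathbf{c}_j}{\sum_{j=1}^N(1-\exp(-w_j))\exp(-\tau|t_j-t_i|)},$$ and the rendered color $$\mathbf{C}=\sum_{i=1}^N\widehat{\mathbf{c}}_i\bigl(1-\exp(-g(f_i))\bigr)\prod_{j=1}^{i-1}\exp(-g(f_j)),$$ where the surfels are sorted by increasing $t_i$ (ties broken arbitrarily). Then $\mathbf{C}$ is a continuous function of the properties of the Gaussian surfels (in particular it does not jump when two surfels' intersection depths cross and their ordering changes). *)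

(* Defs.v *)
From HB Require Import structures.
From mathcomp Require Import all_boot all_order all_algebra.
From mathcomp Require Import all_classical all_reals all_analysis.
From mathcomp Require Import normal_distribution fingroup perm.

Set Implicit Arguments.
Unset Strict Implicit.
Unset Printing Implicit Defensive.

Import Order.TTheory GRing.Theory Num.Theory.
Local Open Scope ring_scope.

Section Defs.
Context {R : realType}.

Definition Psi (x : R) : R := fine (normal_prob 0 1 `]-oo, x]%classic).

Definition gfun (c u : R) : R := - 2 * ln (Psi (c - u)).

Definition vec3 := 'I_3 -> R.
Definition dot (u v : vec3) : R := \sum_(k < 3) u k * v k.
Definition vsub (u v : vec3) : vec3 := fun k => u k - v k.
Definition cross (u v : vec3) : vec3 := fun k =>
  match val k with
  | 0%N => u (inord 1) * v (inord 2) - u (inord 2) * v (inord 1)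
  | 1%N => u (inord 2) * v (inord 0) - u (inord 0) * v (inord 2)
  | _ => u (inord 0) * v (inord 1) - u (inord 1) * v (inord 0)
  end.

(* Surfel i has center m i, tangent
   vectors a1 i, a2 i spanning its plane (its planar covariance is
   Sigma_i = A_i A_i^T with A_i = [a1 i | a2 i]), weight w i and color
   col i (3 channels). *)
Record Surfels (N : nat) := mkSurfels {
  sm : 'I_N -> vec3;
  sa1 : 'I_N -> vec3;
  sa2 : 'I_N -> vec3;
  sw : 'I_N -> R;
  scol : 'I_N -> vec3 }.

Section Render.
Variables (c tau : R) (N : nat) (o omega : vec3) (S : Surfels N).

Definition snormal (i : 'I_N) : vec3 := cross (sa1 S i) (sa2 S i).

Definition tdepth (i : 'I_N) : R :=
  dot (vsub (sm S i) o) (snormal i) / dot omega (snormal i).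

Definition xray (t : R) : vec3 := fun k => o k + t * omega k.

(* (x - m)^T Sigma^{-1} (x - m) for x in the plane of the surfel, written
   through the Gram matrix of (a1, a2): if x - m = u a1 + v a2 then
   this is u^2 + v^2. *)
Definition quadform (i : 'I_N) (x : vec3) : R :=
  let d := vsub x (sm S i) in
  let b1 := dot (sa1 S i) d in
  let b2 := dot (sa2 S i) d in
  let g11 := dot (sa1 S i) (sa1 S i) in
  let g12 := dot (sa1 S i) (sa2 S i) in
  let g22 := dot (sa2 S i) (sa2 S i) in
  (g22 * b1 ^+ 2 - 2 * g12 * b1 * b2 + g11 * b2 ^+ 2) / (g11 * g22 - g12 ^+ 2).

Definition gauss (i : 'I_N) (x : vec3) : R := expR (- (quadform i x / 2)).

Definition fval (i : 'I_N) : R := sw S i * gauss i (xray (tdepth i)).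

Definition blendw (j i : 'I_N) : R :=
  (1 - expR (- sw S j)) * expR (- (tau * `|tdepth j - tdepth i|)).

Definition chat (i : 'I_N) (k : 'I_3) : R :=
  (\sum_(j < N) blendw j i * scol S j k) / (\sum_(j < N) blendw j i).

Definition depth_sorted (sigma : {perm 'I_N}) : Prop :=
  forall p q : 'I_N, (p <= q)%N -> tdepth (sigma p) <= tdepth (sigma q).

Definition render (sigma : {perm 'I_N}) (k : 'I_3) : R :=
  \sum_(p < N) chat (sigma p) k * (1 - expR (- gfun c (fval (sigma p))))
     * \prod_(q < N | (q < p)%N) expR (- gfun c (fval (sigma q))).

End Render.

(* admissible configurations: positive weights, nondegenerate surfels,
   ray not parallel to any surfel plane *)
Definition valid_config (N : nat) (omega : vec3) (S : Surfels N) : Prop :=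
  forall i : 'I_N, 0 < sw S i /\ snormal S i != (fun _ => 0)
                   /\ dot omega (snormal S i) != 0.

Definition params_close (N : nat) (delta : R) (S S' : Surfels N) : Prop :=
  forall (i : 'I_N) (k : 'I_3),
    [/\ `|sm S i k - sm S' i k| < delta, `|sa1 S i k - sa1 S' i k| < delta,
        `|sa2 S i k - sa2 S' i k| < delta, `|sw S i - sw S' i| < delta
      & `|scol S i k - scol S' i k| < delta].

End Defs.

(* Main.v *)
Require Import Defs.
From HB Require Import structures.
From mathcomp Require Import all_boot all_order all_algebra.
From mathcomp Require Import all_classical all_reals all_analysis.
From mathcomp Require Import normal_distribution measurable_realfun fingroup perm.
From mathcomp Require Import ring lra.
Import Order.TTheory GRing.Theory Num.Theory.
Import numFieldNormedType.Exports.
Local Open Scope classical_set_scope.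
Local Open Scope ring_scope.

Section Alg.
Context {R : realType}.
Implicit Types u v : @vec3 R.

Lemma sum3 (F : 'I_3 -> R) : \sum_(k < 3) F k = F (inord 0) + F (inord 1) + F (inord 2).
Proof.
rewrite !big_ord_recl big_ord0 addr0 addrA.
by congr (F _ + F _ + F _); apply: val_inj; rewrite /= ?inordK.
Qed.

Lemma cross0 u v : cross u v (inord 0) = u (inord 1) * v (inord 2) - u (inord 2) * v (inord 1).
Proof. have e : val (inord 0 : 'I_3) = 0%N by rewrite /= inordK. by rewrite /cross e. Qed.
Lemma cross1 u v : cross u v (inord 1) = u (inord 2) * v (inord 0) - u (inord 0) * v (inord 2).
Proof. have e : val (inord 1 : 'I_3) = 1%N by rewrite /= inordK. by rewrite /cross e. Qed.
Lemma cross2 u v : cross u v (inord 2) = u (inord 0) * v (inord 1) - u (inord 1) * v (inord 0).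
Proof. have e : val (inord 2 : 'I_3) = 2%N by rewrite /= inordK. by rewrite /cross e. Qed.

Lemma lagrange u v : dot (cross u v) (cross u v) = dot u u * dot v v - dot u v ^+ 2.
Proof. rewrite /dot !sum3 cross0 cross1 cross2; ring. Qed.

Lemma dot_self_gt0 u : u != (fun _ => 0) -> 0 < dot u u.
Proof.
move=> hu.
have [k hk] : exists k, u k != 0.
  apply: contrapT => hn; move/eqP: hu; apply; apply/funext => k.
  apply/eqP; apply: contrapT => hk; apply: hn; exists k; exact/negP.
rewrite /dot (bigD1 k) //=; apply: ltr_pwDl.
  by rewrite -expr2 lt0r sqr_ge0 andbT expf_neq0.
by apply: sumr_ge0 => i _; rewrite -expr2 sqr_ge0.
Qed.
End Alg.
Section PsiSec.
Context {R : realType}.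
Local Notation P := (normal_prob (0:R) 1).

Lemma P_split (x y : R) : x <= y ->
  (P `]-oo, y] = P `]-oo, x] + P `]x, y])%E.
Proof.
move=> xy.
rewrite (@itv_bndbnd_setU _ _ -oo%O (BRight x) (BRight y)); last 2 first.
- by [].
- by rewrite bnd_simp.
rewrite measureU //.
apply/seteqP; split => z //= []; rewrite !in_itv /=.
by move=> zx /andP[xz _]; move: (lt_le_trans xz zx); rewrite ltxx.
Qed.

Lemma P_fin (A : set R) : measurable A -> (fine (P A))%:E = P A.
Proof. by move=> mA; rewrite fineK // fin_num_measure. Qed.

Lemma P_ub (x y : R) : x <= y -> (P `]x, y] <= (normal_peak 1 * (y - x))%:E)%E.
Proof.
move=> xy; rewrite /normal_prob.
apply: (@le_trans _ _ (\int[lebesgue_measure]_(z in `]x, y]) (cst (normal_peak (1:R))%:E) z))%E.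
  apply: ge0_le_integral => //.
  - by move=> z _; rewrite lee_fin normal_pdf_ge0.
  - apply/measurable_EFinP; apply: measurable_funTS; exact: measurable_normal_pdf.
  - by move=> z _; rewrite lee_fin normal_pdf_ub ?oner_neq0.
rewrite integral_cst //; have := lebesgue_measure_itv `]x, y]; move=> /= ->.
rewrite lte_fin; case: ltP => [_|yx].
  by rewrite -EFinD -EFinM.
by rewrite mule0 lee_fin mulr_ge0 ?normal_peak_ge0 // subr_ge0.
Qed.


Lemma Psi_diff (x y : R) : x <= y -> Psi y - Psi x = fine (P `]x, y]).
Proof. by move=> xy; rewrite /Psi (@P_split x y xy) fineD ?fin_num_measure //; ring. Qed.

Lemma Psi_mono_lip (x y : R) : x <= y -> 0 <= Psi y - Psi x <= normal_peak 1 * (y - x).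
Proof.
move=> xy.
rewrite (@Psi_diff x y xy); apply/andP; split.
  by rewrite fine_ge0 // measure_ge0.
rewrite -lee_fin P_fin //; exact: P_ub.
Qed.

Lemma Psi_lip (x y : R) : `|Psi y - Psi x| <= normal_peak 1 * `|y - x|.
Proof.
wlog xy : x y / x <= y.
  move=> H; case: (leP x y) => [/H //|/ltW yx].
  by rewrite distrC (distrC y); apply: H.
have /andP[h1 h2] := @Psi_mono_lip x y xy.
by rewrite ger0_norm // ger0_norm // subr_ge0.
Qed.

Lemma Psi_cont (x : R) : {for x, continuous Psi}.
Proof.
apply/cvgrPdist_lt => e e0.
have d0 : 0 < e / (normal_peak (1:R) + 1).
  by rewrite divr_gt0 // ltr_wpDl ?normal_peak_ge0.
near=> t.
apply: (le_lt_trans (Psi_lip t x)).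
have : `|x - t| < e / (normal_peak (1:R) + 1).
  near: t; exact: (@cvgr_dist_lt _ R^o _ _ _ id x cvg_id _ d0).
move=> ht; rewrite distrC.
apply: (le_lt_trans (y := (normal_peak 1 + 1) * `|t - x|)).
  by rewrite ler_wpM2r // lerDl.
by rewrite mulrC -ltr_pdivlMr ?ltr_wpDl ?normal_peak_ge0 // distrC.
Unshelve. all: by end_near.
Qed.


Lemma pdf_lb (z a : R) : `|z| <= a ->
  normal_peak 1 * expR (- a ^+ 2 / 2) <= normal_pdf 0 1 z.
Proof.
move=> za; rewrite /normal_pdf oner_eq0 /= ler_wpM2l ?normal_peak_ge0 //.
rewrite /normal_fun ler_expR subr0 expr1n.
have z0 := normr_ge0 z.
have h : z ^+ 2 <= a ^+ 2.
  have -> : z ^+ 2 = `|z| ^+ 2 by rewrite real_normK ?num_real.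
  by rewrite ler_pXn2r // ?nnegrE // (le_trans z0 za).
lra.
Qed.

Lemma P_lb (x : R) : ((normal_peak 1 * expR (- (`|x| + 1) ^+ 2 / 2))%:E <= P `](x - 1)%R, x])%E.
Proof.
rewrite /normal_prob.
apply: (@le_trans _ _ (\int[lebesgue_measure]_(z in `](x - 1)%R, x]) (cst (normal_peak (1:R) * expR (- (`|x| + 1) ^+ 2 / 2)%R)%:E) z))%E; last first.
  apply: ge0_le_integral => //.
  - by move=> z _; rewrite lee_fin mulr_ge0 ?normal_peak_ge0 ?expR_ge0.
  - apply/measurable_EFinP; apply: measurable_funTS; exact: measurable_normal_pdf.
  - move=> z; rewrite /= in_itv /= => /andP[h1 h2]; rewrite lee_fin; apply: pdf_lb.
    have : `|z - x| <= 1 by rewrite ler_norml; apply/andP; split; lra.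
    move=> h; rewrite -[z](subrK x) (le_trans (ler_normD _ _)) // addrC lerD2l //.
rewrite integral_cst //; have := lebesgue_measure_itv `]x - 1, x]; move=> /= ->.
rewrite lte_fin ltrBlDr ltrDl ltr01 -EFinD -EFinM.
rewrite (_ : x + - (x - 1) = 1) ?mulr1 //; lra.
Qed.

Lemma Psi_gt0 (x : R) : 0 < Psi x.
Proof.
have hx : x - 1 <= x by lra.
have h1 := @Psi_mono_lip (x - 1) x hx.
have h2 := @Psi_diff (x - 1) x hx.
have h3 : 0 <= Psi (x - 1) by rewrite /Psi fine_ge0 // measure_ge0.
have h4 : 0 < fine (P `]x - 1, x]).
  rewrite -lte_fin P_fin //; apply: lt_le_trans (P_lb x).
  by rewrite lte_fin mulr_gt0 ?expR_gt0 // normal_peak_gt0 ?oner_neq0.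
lra.
Qed.

End PsiSec.

Section Cont.
Context {R : realType} {N : nat}.
Implicit Types S : Surfels (R:=R) N.

Definition nearS S : set_system (Surfels N) :=
  fun P => exists2 d : R, 0 < d & forall S', params_close d S S' -> P S'.

Lemma pc_mono (d d' : R) S S' : d <= d' -> params_close d S S' -> params_close d' S S'.
Proof. by move=> dd H i k; have [? ? ? ? ?] := H i k; split; apply: lt_le_trans dd. Qed.

Instance nearS_filter S : Filter (nearS S).
Proof.
split.
- by exists 1.
- move=> P Q [d1 d10 H1] [d2 d20 H2]; exists (Order.min d1 d2).
    by rewrite lt_min d10 d20.
  move=> S' HS; split.
    by apply: H1; apply: pc_mono HS; rewrite ge_min lexx.
  by apply: H2; apply: pc_mono HS; rewrite ge_min lexx orbT.
- by move=> P Q PQ [d d0 H]; exists d => // S' /H /PQ.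
Qed.

Definition ct S (h : Surfels N -> R) := h @ nearS S --> h S.

Lemma ctD S f g : ct S f -> ct S g -> ct S (fun S => f S + g S).
Proof. by move=> ??; apply: cvgD. Qed.
Lemma ctM S f g : ct S f -> ct S g -> ct S (fun S => f S * g S).
Proof. by move=> ??; apply: cvgM. Qed.
Lemma ctN S f : ct S f -> ct S (fun S => - f S).
Proof. by move=> ?; apply: cvgN. Qed.
Lemma ctV S f : f S != 0 -> ct S f -> ct S (fun S => (f S)^-1).
Proof. by move=> ??; apply: cvgV. Qed.
Lemma ctC S (a : R) : ct S (fun _ => a).
Proof. exact: cvg_cst. Qed.
Lemma ct_comp S f (phi : R -> R) : {for f S, continuous phi} -> ct S f -> ct S (fun S => phi (f S)).
Proof. by move=> ??; apply: continuous_cvg. Qed.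
Lemma ct_norm S f : ct S f -> ct S (fun S => `|f S|).
Proof. by move=> ?; apply: cvg_norm. Qed.

Lemma ct_big S (I : Type) (r : seq I) (P : pred I) (F : I -> Surfels N -> R) :
  (forall i, ct S (F i)) -> ct S (fun S => \sum_(i <- r | P i) F i S).
Proof.
move=> H; rewrite /ct; elim: r => [|i r IH].
  under eq_cvg do rewrite big_nil.
  by rewrite big_nil; exact: cvg_cst.
under eq_cvg do rewrite big_cons.
rewrite big_cons; case: (P i); last exact: IH.
exact: (@ctD S (F i) (fun S => \sum_(j <- r | P j) F j S) (H i) IH).
Qed.

Lemma ct_sum S (I : finType) (P : pred I) (F : I -> Surfels N -> R) :
  (forall i, ct S (F i)) -> ct S (fun S => \sum_(i | P i) F i S).
Proof. exact: ct_big. Qed.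

Lemma ct_bigp S (I : Type) (r : seq I) (P : pred I) (F : I -> Surfels N -> R) :
  (forall i, ct S (F i)) -> ct S (fun S => \prod_(i <- r | P i) F i S).
Proof.
move=> H; rewrite /ct; elim: r => [|i r IH].
  under eq_cvg do rewrite big_nil.
  by rewrite big_nil; exact: cvg_cst.
under eq_cvg do rewrite big_cons.
rewrite big_cons; case: (P i); last exact: IH.
exact: (@ctM S (F i) (fun S => \prod_(j <- r | P j) F j S) (H i) IH).
Qed.

Lemma ct_prod S (I : finType) (P : pred I) (F : I -> Surfels N -> R) :
  (forall i, ct S (F i)) -> ct S (fun S => \prod_(i | P i) F i S).
Proof. exact: ct_bigp. Qed.

Lemma ct_par S (i : 'I_N) (k : 'I_3) :
  [/\ ct S (fun S => sm S i k), ct S (fun S => sa1 S i k), ct S (fun S => sa2 S i k),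
      ct S (fun S => sw S i) & ct S (fun S => scol S i k)].
Proof.
split; apply/cvgrPdist_lt => e e0; exists e => // S' H; by have [] := H i k.
Qed.

Lemma ct_sm S i k : ct S (fun S => sm S i k). Proof. by case: (ct_par S i k). Qed.
Lemma ct_sa1 S i k : ct S (fun S => sa1 S i k). Proof. by case: (ct_par S i k). Qed.
Lemma ct_sa2 S i k : ct S (fun S => sa2 S i k). Proof. by case: (ct_par S i k). Qed.
Lemma ct_sw S i : ct S (fun S => sw S i). Proof. by case: (ct_par S i ord0). Qed.
Lemma ct_scol S i k : ct S (fun S => scol S i k). Proof. by case: (ct_par S i k). Qed.

Definition ctv S (v : Surfels N -> vec3) := forall k, ct S (fun S => v S k).

Lemma ctX S f n : ct S f -> ct S (fun S => f S ^+ n).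
Proof.
move=> hf; rewrite /ct; elim: n => [|n IH].
  by under eq_cvg do rewrite expr0; rewrite expr0; exact: ctC.
under eq_cvg do rewrite exprS; rewrite exprS; exact: (@ctM S f (fun S => f S ^+ n)).
Qed.

Lemma ct_dot S u v : ctv S u -> ctv S v -> ct S (fun S => dot (u S) (v S)).
Proof. by move=> hu hv; rewrite /dot; apply: ct_sum => k; apply: ctM. Qed.

Lemma ctv_sm S i : ctv S (fun S => sm S i). Proof. move=> k; exact: ct_sm. Qed.
Lemma ctv_sa1 S i : ctv S (fun S => sa1 S i). Proof. move=> k; exact: ct_sa1. Qed.
Lemma ctv_sa2 S i : ctv S (fun S => sa2 S i). Proof. move=> k; exact: ct_sa2. Qed.
Lemma ctv_C S (a : vec3) : ctv S (fun _ => a). Proof. move=> k; exact: ctC. Qed.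
Lemma ctv_sub S u v : ctv S u -> ctv S v -> ctv S (fun S => vsub (u S) (v S)).
Proof. by move=> hu hv k; rewrite /vsub; apply: ctD => //; apply: ctN. Qed.

Ltac ctt := repeat first [ apply: ct_dot | apply: ctX | apply: ctv_sub | apply: ctv_sa1 | apply: ctv_sa2 | apply: ctv_sm | apply: ctv_C | apply: ctD | apply: ctM | apply: ctN | apply: ct_sum => ? | apply: ct_prod => ?
  | apply: ctC | apply: ct_sm | apply: ct_sa1 | apply: ct_sa2 | apply: ct_sw | apply: ct_scol ].

Lemma ctv_cross S u v : ctv S u -> ctv S v -> ctv S (fun S => cross (u S) (v S)).
Proof.
move=> hu hv k; rewrite /cross; case: k => [[|[|m]] hm] /=;
  by apply: ctD; [apply: ctM; [apply: hu|apply: hv] | apply: ctN; apply: ctM; [apply: hu|apply: hv]].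
Qed.

Lemma ctv_normal S i : ctv S (fun S => snormal S i).
Proof. exact: ctv_cross (ctv_sa1 _ _) (ctv_sa2 _ _). Qed.

Variables (c tau : R) (o omega : @vec3 R).

Lemma ct_tdepth S i : valid_config omega S -> ct S (fun S => tdepth o omega S i).
Proof.
move=> hv; rewrite /tdepth; apply: ctM.
  apply: ct_dot; [apply: ctv_sub; [exact: ctv_sm | exact: ctv_C]| exact: ctv_normal].
apply: ctV; first by have [_ [_ ]] := hv i.
apply: ct_dot; [exact: ctv_C | exact: ctv_normal].
Qed.

Lemma ctv_xray S (t : Surfels N -> R) : ct S t -> ctv S (fun S => xray o omega (t S)).
Proof. by move=> ht k; rewrite /xray; apply: ctD; [exact: ctC| apply: ctM; [exact: ht | exact: ctC]]. Qed.

Lemma ct_quadform S i (x : Surfels N -> vec3) : valid_config omega S -> ctv S x ->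
  ct S (fun S => quadform S i (x S)).
Proof.
move=> hv hx; rewrite /quadform.
have d11 := @ct_dot S _ _ (ctv_sa1 S i) (ctv_sa1 S i).
have d12 := @ct_dot S _ _ (ctv_sa1 S i) (ctv_sa2 S i).
have d22 := @ct_dot S _ _ (ctv_sa2 S i) (ctv_sa2 S i).
have b1 := @ct_dot S _ _ (ctv_sa1 S i) (@ctv_sub S _ _ hx (ctv_sm S i)).
have b2 := @ct_dot S _ _ (ctv_sa2 S i) (@ctv_sub S _ _ hx (ctv_sm S i)).
apply: ctM.
  apply: ctD; first apply: ctD.
  - by apply: ctM; [exact: d22 | apply: ctX; exact: b1].
  - by apply: ctN; apply: ctM; [apply: ctM; [apply: ctM; [exact: ctC | exact: d12] | exact: b1] | exact: b2].
  - by apply: ctM; [exact: d11 | apply: ctX; exact: b2].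
apply: ctV.
  rewrite -lagrange; apply/lt0r_neq0/dot_self_gt0.
  by have [_ [+ _]] := hv i.
by apply: ctD; [apply: ctM; [exact: d11| exact: d22] | apply: ctN; apply: ctX; exact: d12].
Qed.

Lemma ct_fval S i : valid_config omega S -> ct S (fun S => fval o omega S i).
Proof.
move=> hv; rewrite /fval /gauss; apply: ctM; first exact: ct_sw.
apply: ct_comp; first exact: continuous_expR.
apply: ctN; apply: ctM; last exact: ctC.
apply: ct_quadform => //; apply: ctv_xray; exact: ct_tdepth.
Qed.

Definition Aval S i := expR (- gfun c (fval o omega S i)).

Lemma ct_Aval S i : valid_config omega S -> ct S (fun S => Aval S i).
Proof.
move=> hv; rewrite /Aval /gfun; apply: ct_comp; first exact: continuous_expR.
apply: ctN; apply: ctM; first exact: ctC.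
apply: ct_comp; first exact/continuous_ln/Psi_gt0.
apply: ct_comp; first exact: Psi_cont.
apply: ctD; first exact: ctC.
by apply: ctN; apply: ct_fval.
Qed.

Lemma blendw_gt0 S j i : valid_config omega S -> 0 < blendw tau o omega S j i.
Proof.
move=> hv; rewrite /blendw mulr_gt0 ?expR_gt0 // subr_gt0 expR_lt1 oppr_lt0.
by have [] := hv j.
Qed.

Lemma ct_chat S i k : valid_config omega S -> ct S (fun S => chat tau o omega S i k).
Proof.
move=> hv; rewrite /chat /blendw.
have hb : forall j, ct S (fun S => (1 - expR (- sw S j)) * expR (- (tau * `|tdepth o omega S j - tdepth o omega S i|))).
  move=> j; apply: ctM.
    apply: ctD; first exact: ctC.
    apply: ctN; apply: ct_comp; first exact: continuous_expR.
    by apply: ctN; apply: ct_sw.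
  apply: ct_comp; first exact: continuous_expR.
  apply: ctN; apply: ctM; first exact: ctC.
  by apply: ct_norm; apply: ctD; [apply: ct_tdepth | apply: ctN; apply: ct_tdepth].
apply: ctM.
  by apply: ct_sum => j; apply: ctM; [apply: hb | apply: ct_scol].
apply: ctV; last by apply: ct_sum => j; apply: hb.
rewrite lt0r_neq0 // (bigD1 i) //= ltr_pwDl //.
  exact: (blendw_gt0 S i i hv).
by apply: sumr_ge0 => j _; apply/ltW/(blendw_gt0 S j i hv).
Qed.

Lemma ct_render S (sigma : {perm 'I_N}) k : valid_config omega S ->
  ct S (fun S => render c tau o omega S sigma k).
Proof.
move=> hv; rewrite /render; apply: ct_sum => p.
apply: ctM; last by apply: ct_prod => q; apply: ct_Aval.
apply: ctM; first exact: ct_chat.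
apply: ctD; first exact: ctC.
by apply: ctN; apply: ct_Aval.
Qed.

End Cont.
Section Comb.
Context {R : realType} {N : nat}.
Variables (c tau : R) (o omega : @vec3 R) (S : @Surfels R N).
Local Notation t := (tdepth o omega S).
Local Notation A i := (expR (- gfun c (fval o omega S i))).

Lemma sorted_seq (pi : {perm 'I_N}) : depth_sorted o omega S pi ->
  sorted <=%R [seq t (pi p) | p <- enum 'I_N].
Proof.
move=> hs.
have h : sorted (fun p q : 'I_N => (p < q)%N) (enum 'I_N).
  by rewrite -(sorted_map (f := val) (e' := ltn)) val_enum_ord iota_ltn_sorted.
rewrite -[[seq _ | _ <- _]]/(map (fun p => t (pi p)) (enum 'I_N)).
apply: (homo_sorted _ _ h) => p q pq; apply: hs; exact: ltnW.
Qed.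

Lemma perm_seq (pi : {perm 'I_N}) :
  perm_eq [seq t (pi p) | p <- enum 'I_N] [seq t p | p <- enum 'I_N].
Proof.
rewrite (map_comp t pi); apply: perm_map.
apply: uniq_perm; first by rewrite map_inj_uniq ?enum_uniq //; exact: perm_inj.
  exact: enum_uniq.
move=> x; rewrite mem_enum inE; apply/mapP; exists (pi^-1 x)%g; first by rewrite mem_enum.
by rewrite permKV.
Qed.

Lemma nth_map_enum (T : Type) (x0 : T) (f : 'I_N -> T) (p : 'I_N) :
  nth x0 [seq f q | q <- enum 'I_N] p = f p.
Proof. by rewrite (nth_map p) ?size_enum_ord // nth_ord_enum. Qed.

Lemma same_t (pi pi' : {perm 'I_N}) : depth_sorted o omega S pi -> depth_sorted o omega S pi' ->
  forall p, t (pi p) = t (pi' p).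
Proof.
move=> h h' p.
have e : [seq t (pi p) | p <- enum 'I_N] = [seq t (pi' p) | p <- enum 'I_N].
  apply: (sorted_eq _ _ (@sorted_seq pi h) (@sorted_seq pi' h')).
  - by move=> ? ? ?; apply: le_trans.
  - by move=> ? ?; apply: le_anti.
  by rewrite (perm_trans (perm_seq pi)) // perm_sym perm_seq.
have := congr1 (fun s => nth 0 s p) e.
by rewrite (@nth_map_enum _ 0 (fun q => t (pi q))) (@nth_map_enum _ 0 (fun q => t (pi' q))).
Qed.

Lemma chat_t i i' k : t i = t i' -> chat tau o omega S i k = chat tau o omega S i' k.
Proof. by move=> e; rewrite /chat /blendw e. Qed.

Definition Qf (pi : {perm 'I_N}) (p : nat) := \prod_(j < N | (j < p)%N) A (pi j).

Lemma QfS (pi : {perm 'I_N}) (q : 'I_N) : Qf pi q.+1 = Qf pi q * A (pi q).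
Proof.
rewrite /Qf (bigD1 q) //= mulrC; congr (_ * _); apply: eq_bigl => j.
by rewrite ltnS ltn_neqAle andbC -val_eqE.
Qed.

Lemma Qf0 pi : Qf pi 0 = 1.
Proof. by rewrite /Qf big_pred0 // => j; rewrite ltn0. Qed.

Lemma QfN pi : Qf pi N = \prod_j A j.
Proof.
rewrite /Qf.
have e : \prod_(j < N | (j < N)%N) A (pi j) = \prod_j A (pi j).
  by apply: eq_bigl => j; rewrite ltn_ord.
apply: (etrans e).
exact: (esym (@reindex_inj _ _ _ _ pi xpredT (fun j => A j) (@perm_inj _ pi))).
Qed.

Lemma Qf_char (pi : {perm 'I_N}) (q : 'I_N) : depth_sorted o omega S pi ->
  (forall j : 'I_N, (j < q)%N -> t (pi j) < t (pi q)) ->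
  Qf pi q = \prod_(j | t j < t (pi q)) A j.
Proof.
move=> hs hlt.
rewrite [RHS](reindex_inj (@perm_inj _ pi)) /Qf; apply: eq_bigl => j.
case: (ltnP j q) => jq; first by rewrite hlt.
by apply/esym/negbTE; rewrite -leNgt; apply: hs.
Qed.

Lemma abel (h D : nat -> R) n : D 0%N = 0 -> D n = 0 ->
  (forall p, (0 < p < n)%N -> (h p - h p.-1) * D p = 0) ->
  \sum_(0 <= p < n) h p * (D p - D p.+1) = 0.
Proof.
move=> D0 Dn H.
suff : forall m, (0 < m <= n)%N -> \sum_(0 <= p < m) h p * (D p - D p.+1) = - h m.-1 * D m.
  case: n Dn H => [|n] Dn H; first by rewrite big_geq.
  by move=> /(_ n.+1); rewrite ltn0Sn leqnn /= Dn mulr0 => ->.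
elim => [//|m IH] /andP[_ hm].
case: m IH hm => [|m] IH hm.
  by rewrite big_nat1 D0 sub0r mulrN mulNr.
rewrite big_nat_recr //= IH ?ltn0Sn 1?ltnW //=.
have := H m.+1; rewrite ltn0Sn hm /= => /(_ isT) e.
have -> : - h m * D m.+1 = - h m.+1 * D m.+1 + (h m.+1 - h m) * D m.+1 by ring.
rewrite e; ring.
Qed.


Lemma subr4 (x1 x2 x3 x4 : R) : (x1 - x2) - (x3 - x4) = (x1 - x3) - (x2 - x4).
Proof. ring. Qed.

Lemma mul3 (x1 x2 x3 : R) : x1 * (1 - x2) * x3 = x1 * (x3 - x3 * x2).
Proof. ring. Qed.

Definition hf (pi : {perm 'I_N}) k (p : nat) : R :=
  if insub p is Some q then chat tau o omega S (pi q) k else 0.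

Lemma hfE pi k (q : 'I_N) : hf pi k q = chat tau o omega S (pi q) k.
Proof. by rewrite /hf valK. Qed.

Lemma render_abel pi k :
  render c tau o omega S pi k = \sum_(0 <= p < N) hf pi k p * (Qf pi p - Qf pi p.+1).
Proof.
rewrite big_mkord /render; apply: eq_bigr => q _.
rewrite hfE QfS; exact: mul3.
Qed.

Lemma render_indep (pi pi' : {perm 'I_N}) k :
  depth_sorted o omega S pi -> depth_sorted o omega S pi' ->
  render c tau o omega S pi k = render c tau o omega S pi' k.
Proof.
move=> hs hs'.
have ht := @same_t pi pi' hs hs'.
have eh : forall p, hf pi' k p = hf pi k p.
  by move=> p; rewrite /hf; case: insub => // q; apply: chat_t; rewrite ht.
apply/eqP; rewrite -subr_eq0; apply/eqP.
rewrite !render_abel.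
under [X in _ - X]eq_bigr do rewrite eh.
rewrite -sumrB.
under eq_bigr do rewrite -mulrBr.
set D := fun p => Qf pi p - Qf pi' p.
rewrite -[RHS](@abel (hf pi k) D N).
- apply: eq_bigr => p _; rewrite /D; apply: (congr1 (fun x => hf pi k p * x)).
  exact: (subr4 (Qf pi p) (Qf pi p.+1) (Qf pi' p) (Qf pi' p.+1)).
- by rewrite /D !Qf0 subrr.
- by rewrite /D !QfN subrr.
move=> p /andP[p0 pN].
have pN' : (p.-1 < N)%N by apply: leq_ltn_trans (leq_pred p) pN.
set q := Ordinal pN; set q' := Ordinal pN'.
have e1 : hf pi k p = chat tau o omega S (pi q) k by rewrite -hfE.
have e2 : hf pi k p.-1 = chat tau o omega S (pi q') k by rewrite -hfE.
have qq : (q' <= q)%N by rewrite /= leq_pred.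
have le1 := hs _ _ qq.
case: (eqVneq (t (pi q')) (t (pi q))) => [eqt|neqt].
  by rewrite e1 e2 (chat_t _ _ k eqt) subrr mul0r.
have lt1 : t (pi q') < t (pi q) by rewrite lt_neqAle neqt le1.
have hj : forall j : 'I_N, (j < q)%N -> (j <= q')%N.
  by move=> j jq; rewrite /= -ltnS (prednK p0).
rewrite /D (@Qf_char pi q) //; last first.
  by move=> j /hj jq; apply: le_lt_trans (hs _ _ jq) lt1.
rewrite (@Qf_char pi' q) //; last first.
  by move=> j /hj jq; apply: le_lt_trans (hs' _ _ jq) _; rewrite -(ht q') -(ht q).
by rewrite -(ht q) subrr mulr0.
Qed.

End Comb.

Section Sort.
Context {R : realType} {N : nat}.
Variables (o omega : @vec3 R) (S : @Surfels R N).
Local Notation t := (tdepth o omega S).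

Definition sseq := sort (fun i j : 'I_N => t i <= t j) (enum 'I_N).

Lemma sseq_size : size sseq = N.
Proof. by rewrite size_sort size_enum_ord. Qed.

Lemma sseq_uniq : uniq sseq.
Proof. by rewrite sort_uniq enum_uniq. Qed.

Lemma sseq_sorted : sorted (fun i j : 'I_N => t i <= t j) sseq.
Proof. by apply: sort_sorted => i j; apply: le_total. Qed.

Definition sfun (p : 'I_N) : 'I_N := nth p sseq p.

Lemma sfun_inj : injective sfun.
Proof.
move=> p q; rewrite /sfun (set_nth_default p q) ?sseq_size //.
move/eqP; rewrite nth_uniq ?sseq_size ?sseq_uniq //.
by move/eqP/val_inj.
Qed.

Definition sortperm : {perm 'I_N} := perm sfun_inj.

Lemma sortperm_sorted : depth_sorted o omega S sortperm.
Proof.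
move=> p q pq; rewrite !permE /sfun (set_nth_default p q) ?sseq_size //.
apply: (sorted_leq_nth (leT := fun i j : 'I_N => t i <= t j)) => //.
- by move=> ? ? ?; apply: le_trans.
- exact: sseq_sorted.
- by rewrite inE sseq_size.
- by rewrite inE sseq_size.
Qed.
End Sort.



Local Close Scope classical_set_scope.

Theorem theorem2 (R : realType) (c tau : R) (hc : 0 < c) (htau : 0 < tau)
  (N : nat) (o omega : 'I_3 -> R) :
  exists F : Surfels N -> 'I_3 -> R,
    (forall S : Surfels N, valid_config omega S ->
       forall sigma : {perm 'I_N}, depth_sorted o omega S sigma ->
       forall k : 'I_3, render c tau o omega S sigma k = F S k)
    /\
    (forall S : Surfels N, valid_config omega S ->
       forall eps : R, 0 < eps -> exists2 delta : R, 0 < delta &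
       forall S' : Surfels N, valid_config omega S' -> params_close delta S S' ->
       forall k : 'I_3, `|F S k - F S' k| < eps).
Proof.
exists (fun S k => render c tau o omega S (sortperm o omega S) k).
split.
  move=> S hv sigma hs k.
  exact: (render_indep c tau o omega S sigma (sortperm o omega S) k hs (sortperm_sorted o omega S)).
move=> S hv eps e0.
have H1 : nearS S (fun S' => forall pk : {perm 'I_N} * 'I_3,
    `|render c tau o omega S pk.1 pk.2 - render c tau o omega S' pk.1 pk.2| < eps).
  apply: (@filter_forall _ _ _ (nearS S) (nearS_filter S)) => -[pi k] /=.
  have := ct_render c tau o omega S pi k hv.
  by move/cvgrPdist_lt => /(_ (nearS_filter S) eps e0).
have H2 : nearS S (fun S' => forall ab : 'I_N * 'I_N,
    tdepth o omega S ab.1 < tdepth o omega S ab.2 -> tdepth o omega S' ab.1 < tdepth o omega S' ab.2).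
  apply: (@filter_forall _ _ _ (nearS S) (nearS_filter S)) => -[a b] /=.
  case: (ltP (tdepth o omega S a) (tdepth o omega S b)) => hab.
    have hct : ct S (fun S' => tdepth o omega S' b - tdepth o omega S' a).
      by apply: ctD; [apply: ct_tdepth | apply: ctN; apply: ct_tdepth].
    have := @cvgr_gt _ _ _ (nearS_filter S) _ _ hct 0; rewrite subr_gt0 => /(_ hab) hn.
    apply: (@filterS _ _ (nearS_filter S) _ _ _ hn) => S' /=.
    by rewrite subr_gt0.
  by apply: (@filterS _ _ (nearS_filter S) _ _ _ (@filterT _ _ (nearS_filter S))) => S' _.
have [d d0 Hd] := @filterI _ _ (nearS_filter S) _ _ H1 H2.
exists d => // S' _ hcl k.
have [h1 h2] := Hd S' hcl.
set s' := sortperm o omega S'.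
have hs : depth_sorted o omega S s'.
  move=> p q pq; rewrite leNgt; apply/negP => hlt.
  have h3 := h2 (s' q, s' p) hlt.
  have h4 := sortperm_sorted o omega S' p q pq.
  by move: (lt_le_trans h3 h4); rewrite ltxx.
rewrite (render_indep c tau o omega S (sortperm o omega S) s' k (sortperm_sorted o omega S) hs).
exact: (h1 (s', k)).
Qed.
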